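(* Suppose there exist $\bar\beta_1,\dots,\bar\beta_{m^*}\in\mathcal B^*$ and nonnegative constants $\mu_1,\dots,\mu_{m^*}$ with $\Pi^*\preceq\sum_{k=1}^{m^*}\mu_k\bar\beta_k\bar\beta_k^\top$, and set $\mu^*=\sum_k\mu_k$. If $\max_\ell|\hat\beta_\ell-\beta_\ell|\le\varepsilon$, then $$\operatorname{tr}\big((I-\widehat\Pi)\Pi^*\big)\le4\varepsilon^2\mu^*\quad\text{and}\quad\operatorname{tr}\big((\widehat\Pi-\Pi^* )^2\big)\le8\varepsilon^2\mu^*.$$
   Context: Let $\mathcal S$ be an $m^*$-dimensional linear subspace of $\mathbb R^d$ with orthogonal projector $\Pi^*$, let $\beta_1,\dots,\beta_L\in\mathcal S$, and let $\hat\beta_1,\dots,\hat\beta_L\in\mathbb R^d$ be arbitrary. $|\cdot|$ is the Euclidean norm, $I$ the $d\times d$ identity, $A\preceq B$ means $B-A$ is positive semidefinite. $\mathcal B^*=\{\sum_{\ell=1}^Lc_\ell\beta_\ell:\sum_\ell|c_\ell|\le1\}$. Let $\mathcal A_{m^*}=\{\Pi\in\mathbb R^{d\times d}:\Pi=\Pi^\top,\ 0\preceq\Pi\preceq I,\ \operatorname{tr}\Pi\le m^*\}$ and let $\widehat\Pi$ be a minimizer over $\Pi\in\mathcal A_{m^*}$ of $\max_\ell\hat\beta_\ell^\top(I-\Pi)\hat\beta_\ell$. *)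

(* Defs.v *)
From mathcomp Require Import all_boot all_order all_algebra.
From mathcomp Require Import reals.
Set Implicit Arguments. Unset Strict Implicit. Unset Printing Implicit Defensive.
Import Order.TTheory GRing.Theory Num.Theory.
Local Open Scope ring_scope.

Section Defs.
Variable R : realType.

Definition vnorm d (v : 'cV[R]_d) : R := Num.sqrt ((v^T *m v) 0 0).

Definition psd d (M : 'M[R]_d) : Prop := forall x : 'cV[R]_d, 0 <= (x^T *m M *m x) 0 0.

Definition loewner_le d (A B : 'M[R]_d) : Prop := psd (B - A).

Definition orth_proj_dim d (P : 'M[R]_d) (m : nat) : Prop :=
  P^T = P /\ P *m P = P /\ \rank P = m.

Definition in_range_proj d (P : 'M[R]_d) (v : 'cV[R]_d) : Prop := P *m v = v.

Definition in_Bstar d L (beta : 'I_L -> 'cV[R]_d) (v : 'cV[R]_d) : Prop :=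
  exists c : 'I_L -> R, \sum_(l < L) `|c l| <= 1 /\ v = \sum_(l < L) c l *: beta l.

Definition in_A d (m : nat) (P : 'M[R]_d) : Prop :=
  P^T = P /\ loewner_le 0 P /\ loewner_le P 1%:M /\ \tr P <= m%:R.

(* objective: max_l bhat_l^T (I - Pi) bhat_l (seeded with 0; all terms are
   nonnegative on A_m, so this equals the maximum when L >= 1) *)
Definition obj d L (bhat : 'I_L -> 'cV[R]_d) (P : 'M[R]_d) : R :=
  \big[Num.max/0]_(l < L) ((bhat l)^T *m (1%:M - P) *m bhat l) 0 0.

Definition is_minimizer d L (m : nat) (bhat : 'I_L -> 'cV[R]_d) (P : 'M[R]_d) : Prop :=
  in_A m P /\ forall Q, in_A m Q -> obj bhat P <= obj bhat Q.

End Defs.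

(* Main.v *)
Require Import Defs.
From mathcomp Require Import all_boot all_order all_algebra.
From mathcomp Require Import reals.
From mathcomp Require Import ring lra.
Set Implicit Arguments. Unset Strict Implicit. Unset Printing Implicit Defensive.
Import Order.TTheory GRing.Theory Num.Theory.
Local Open Scope ring_scope.

Section H.
Variable R : realType.

Lemma qblock m1 m2 (P : 'M[R]_(m1,m1)) Q S T (x : 'cV_m1) (y : 'cV_m2) :
  (col_mx x y)^T *m block_mx P Q S T *m col_mx x y =
  x^T *m P *m x + y^T *m S *m x + (x^T *m Q *m y + y^T *m T *m y).
Proof.
rewrite tr_col_mx mul_row_block mul_row_col !mulmxDl. by [].
Qed.

Lemma tr_proj n (P : 'M[R]_n) : P *m P = P -> \tr P = (\rank P)%:R.
Proof.
move=> PP.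
have /row_fullP [B BC] := col_base_full P.
have /row_freeP [D DD] := row_base_free P.
have hP := mulmx_base P.
move: (col_base P) (row_base P) BC DD hP => C E BC DD hP.
have e0 : C *m E *m (C *m E) = C *m E by rewrite hP.
have e : E *m C = 1%:M.
  have := congr1 (fun X => B *m X *m D) e0; rewrite /=.
  rewrite !mulmxA BC mul1mx -!mulmxA DD mulmx1.
  by [].
have -> : \tr P = \tr (C *m E) by rewrite hP.
by rewrite mxtrace_mulC e mxtrace1.
Qed.

Lemma trace11 (A : 'M[R]_1) : \tr A = A 0 0.
Proof. by rewrite /mxtrace big_ord1. Qed.

Lemma vTv_ge0 n (v : 'cV[R]_n) : 0 <= (v^T *m v) 0 0.
Proof.
rewrite mxE; apply: sumr_ge0 => i _; rewrite !mxE -expr2; exact: sqr_ge0.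
Qed.

Lemma vTv_eq0 n (v : 'cV[R]_n) : (v^T *m v) 0 0 = 0 -> v = 0.
Proof.
rewrite mxE => H.
have H2 : forall i : 'I_n, true -> 0 <= v^T 0 i * v i 0.
  by move=> k _; rewrite !mxE -expr2; exact: sqr_ge0.
have H3 := psumr_eq0P H2 H.
apply/matrixP => i j; rewrite (ord1 j) mxE.
have := H3 i isT; rewrite !mxE -expr2 => /eqP; rewrite sqrf_eq0 => /eqP.
done.
Qed.


Lemma tr11 (M : 'M[R]_1) : M^T = M.
Proof. by apply/matrixP => i j; rewrite (ord1 i) (ord1 j) mxE. Qed.

Lemma key_quad n (a : 'M[R]_1) (b : 'M[R]_(n,1)) (C : 'M[R]_n) :
  psd (block_mx a b^T b C) -> forall t (y : 'cV[R]_n),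
  0 <= a 0 0 * t ^+ 2 + 2 * t * (b^T *m y) 0 0 + (y^T *m C *m y) 0 0.
Proof.
move=> pB t y; have := pB (col_mx t%:M y); rewrite qblock.
rewrite (mx11_scalar a) tr_scalar_mx !mul_scalar_mx !mul_mx_scalar.
have -> : y^T *m b = b^T *m y by rewrite -[y^T *m b]tr11 trmx_mul trmxK.
rewrite -!scalemxAl.
set s := (b^T *m y); set g := (y^T *m C *m y); clearbody s g.
rewrite !mxE eqxx mulr1n.
by move=> h; nra.
Qed.


Lemma psd_dr n (A : 'M[R]_(1+n)) : psd A -> psd (drsubmx A).
Proof.
move=> pA y; have := pA (col_mx 0 y).
by rewrite -{1}(submxK A) qblock !trmx0 !mul0mx !mulmx0 !add0r.
Qed.

Lemma tr_lr n (A : 'M[R]_(1+n)) (S : 'M[R]_n) :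
  \tr (A *m block_mx 0 0 0 S) = \tr (drsubmx A *m S).
Proof.
rewrite -{1}(submxK A) mulmx_block mxtrace_block !mulmx0 !addr0 !add0r.
by rewrite mxtrace0 add0r.
Qed.

Lemma entB m n (X Y : 'M[R]_(m,n)) i j : (X - Y) i j = X i j - Y i j.
Proof. by rewrite !mxE. Qed.
Lemma entD m n (X Y : 'M[R]_(m,n)) i j : (X + Y) i j = X i j + Y i j.
Proof. by rewrite !mxE. Qed.
Lemma entN m n (X : 'M[R]_(m,n)) i j : (- X) i j = - X i j.
Proof. by rewrite !mxE. Qed.
Lemma ent0 m n i j : (0 : 'M[R]_(m,n)) i j = 0.
Proof. by rewrite !mxE. Qed.
Lemma trZ m n c (X : 'M[R]_(m,n)) : (c *: X)^T = c *: X^T.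
Proof. by apply/matrixP => i j; rewrite !mxE. Qed.
Lemma entZ m n c (X : 'M[R]_(m,n)) i j : (c *: X) i j = c * X i j.
Proof. by rewrite !mxE. Qed.

Lemma mul11 (M N : 'M[R]_1) : (M *m N) 0 0 = M 0 0 * N 0 0.
Proof. by rewrite mxE big_ord1. Qed.

Lemma step n
  (IH : forall A B : 'M[R]_n, psd A -> B^T = B -> psd B -> 0 <= \tr (A *m B))
  (A : 'M[R]_(1+n)) a u b C :
  psd A -> (block_mx a u b C)^T = block_mx a u b C -> psd (block_mx a u b C) ->
  0 <= \tr (A *m block_mx a u b C).
Proof.
move=> pA sB pB.
move: (sB); rewrite tr_block_mx => /eq_block_mx [_ hu _ hC].
subst u.
have key := key_quad pB.
have hdr : psd C.
  by move=> y; have := psd_dr pB y; rewrite -[block_mx _ _ _ _]/(block_mx a b^T b C) block_mxKdr.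
have [a0|an0] := eqVneq (a 0 0) 0.
  have ha : a = 0 by rewrite (mx11_scalar a) a0 raddf0.
  have hb : b = 0.
    apply: vTv_eq0; apply/eqP; apply: contraT => sn0.
    set sv := (b^T *m b) 0 0 in sn0 *.
    set g := (b^T *m C *m b) 0 0.
    have hg : 0 <= g by have := key 0 b; rewrite a0 -/g; lra.
    have := key (-(g+1)/(2*sv)) b; rewrite -/sv -/g a0 mul0r add0r.
    have -> : 2 * (- (g + 1) / (2 * sv)) * sv = -(g+1).
      by field; exact: sn0.
    by rewrite opprD addrAC addNr add0r oppr_ge0 ler10.
  rewrite ha hb trmx0 tr_lr; exact: IH (psd_dr pA) hC hdr.
set al := a 0 0 in an0 key *.
have al0 : 0 < al.
  rewrite lt_def an0 /=.
  have := key 1 0; rewrite !mulmx0 !mxE mulr0 expr1n mulr1 !addr0.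
  done.
pose S := C - al^-1 *: (b *m b^T).
pose w := col_mx a b.
have eB : block_mx a b^T b C = al^-1 *: (w *m w^T) + block_mx 0 0 0 S.
  rewrite /w tr_col_mx mul_col_row scale_block_mx add_block_mx !addr0.
  rewrite (mx11_scalar a) -/al tr_scalar_mx mul_scalar_mx mul_scalar_mx mul_mx_scalar.
  rewrite !scalerA mulVf // scale1r /S addrC subrK.
  by rewrite !scale1r.
rewrite eB mulmxDr mxtraceD -scalemxAr mxtraceZ tr_lr.
apply: addr_ge0.
  apply: mulr_ge0; first by rewrite invr_ge0 ltW.
  rewrite mulmxA mxtrace_mulC trace11 mulmxA; exact: pA.
apply: IH (psd_dr pA) _ _.
  by rewrite /S linearB /= linearZ /= trmx_mul trmxK hC.
move=> y.
have := key (- (b^T *m y) 0 0 / al) y.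
rewrite /S mulmxBr mulmxBl -scalemxAr -scalemxAl.
have -> : y^T *m (b *m b^T) *m y = (b^T *m y)^T *m (b^T *m y).
  by rewrite trmx_mul trmxK !mulmxA.
rewrite tr11 entB entZ mul11.
move: ((b^T *m y) 0 0) ((y^T *m C *m y) 0 0) => s g.
have -> : al * (- s / al) ^+ 2 + 2 * (- s / al) * s + g = g - al^-1 * (s * s).
  by field.
by [].
Qed.


Lemma tr_psd n (A B : 'M[R]_n) : psd A -> B^T = B -> psd B -> 0 <= \tr (A *m B).
Proof.
elim: n A B => [|n IH] A B pA sB pB.
  by rewrite /mxtrace big_ord0.
have E := @submxK _ 1 n 1 n B.
rewrite -E in sB pB *.
exact: (@step n IH A _ _ _ _ pA sB pB).
Qed.


Lemma bsym n (A : 'M[R]_n) (x y : 'cV[R]_n) : A^T = A ->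
  (x^T *m A *m y) 0 0 = (y^T *m A *m x) 0 0.
Proof.
move=> sA; rewrite -[x^T *m A *m y]tr11 !trmx_mul trmxK sA.
by rewrite mulmxA.
Qed.

Lemma qD n (A : 'M[R]_n) (x y : 'cV[R]_n) : A^T = A ->
  ((x + y)^T *m A *m (x + y)) 0 0 =
  (x^T *m A *m x) 0 0 + 2 * (x^T *m A *m y) 0 0 + (y^T *m A *m y) 0 0.
Proof.
move=> sA; have -> : (x + y)^T = x^T + y^T by apply/matrixP => i j; rewrite !mxE.
rewrite !mulmxDr !mulmxDl !entD (bsym y x sA).
by rewrite mulr2n; ring.
Qed.

Lemma qN n (A : 'M[R]_n) (x : 'cV[R]_n) :
  ((- x)^T *m A *m (- x)) 0 0 = (x^T *m A *m x) 0 0.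
Proof.
have -> : (- x)^T = - x^T by apply/matrixP => i j; rewrite !mxE.
by rewrite mulNmx mulmxN mulNmx opprK.
Qed.

Lemma qB n (A : 'M[R]_n) (x y : 'cV[R]_n) : A^T = A ->
  ((x - y)^T *m A *m (x - y)) 0 0 =
  (x^T *m A *m x) 0 0 - 2 * (x^T *m A *m y) 0 0 + (y^T *m A *m y) 0 0.
Proof.
move=> sA; rewrite qD // qN.
rewrite mulmxN entN; ring.
Qed.

Lemma bf_bound n (A : 'M[R]_n) (x y : 'cV[R]_n) : A^T = A -> psd A ->
  `|(x^T *m A *m y) 0 0| <= ((x^T *m A *m x) 0 0 + (y^T *m A *m y) 0 0) / 2.
Proof.
move=> sA pA; have h1 := pA (x + y); have h2 := pA (x - y).
rewrite qD // in h1; rewrite qB // in h2.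
rewrite ler_norml; apply/andP; split; lra.
Qed.

Lemma psd_proj n (Q : 'M[R]_n) : Q^T = Q -> Q *m Q = Q -> psd Q.
Proof.
move=> sQ QQ x.
have -> : x^T *m Q *m x = (Q *m x)^T *m (Q *m x).
  by rewrite trmx_mul sQ !mulmxA -(mulmxA _ Q Q) QQ.
exact: vTv_ge0.
Qed.

Lemma qsum n L (A : 'M[R]_n) (c : 'I_L -> R) (v : 'I_L -> 'cV[R]_n) :
  let x := \sum_(l < L) c l *: v l in
  (x^T *m A *m x) 0 0 =
  \sum_(l < L) \sum_(m < L) c l * c m * ((v l)^T *m A *m v m) 0 0.
Proof.
rewrite /= (raddf_sum (@trmx R n 1)) /= mulmx_suml mulmx_suml summxE; apply: eq_bigr => l _.
rewrite mulmx_sumr summxE; apply: eq_bigr => m _.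
rewrite linearZ /=.
have -> : (c l *: v l)^T = c l *: (v l)^T by apply/matrixP => i j; rewrite !mxE.
rewrite -!scalemxAl !entZ; ring.
Qed.


Lemma qsum_bound n L (A : 'M[R]_n) (c : 'I_L -> R) (v : 'I_L -> 'cV[R]_n) K :
  A^T = A -> psd A -> 0 <= K -> (forall l, ((v l)^T *m A *m v l) 0 0 <= K) ->
  \sum_(l < L) `|c l| <= 1 ->
  let x := \sum_(l < L) c l *: v l in (x^T *m A *m x) 0 0 <= K.
Proof.
move=> sA pA K0 hK hc /=; rewrite qsum.
apply: (@le_trans _ _ (\sum_(l < L) \sum_(m < L) `|c l| * `|c m| * K)).
  apply: ler_sum => l _; apply: ler_sum => m _.
  apply: (le_trans (ler_norm _)).
  rewrite !normrM; apply: ler_wpM2l; first by rewrite mulr_ge0.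
  apply: (le_trans (bf_bound _ _ sA pA)).
  have := hK l; have := hK m; lra.
have -> : \sum_(l < L) \sum_(m < L) `|c l| * `|c m| * K =
    (\sum_(l < L) `|c l|) * (\sum_(m < L) `|c m|) * K.
  rewrite !big_distrl /=; apply: eq_bigr => l _.
  rewrite big_distrr big_distrl /=; apply: eq_bigr => m _; ring.
have s0 : 0 <= \sum_(l < L) `|c l| by apply: sumr_ge0 => l _.
move: s0 hc; set S := \sum_(l < L) _ => s0 hc.
have h1 : S * S <= 1 by nra.
by rewrite -[X in _ <= X]mul1r; apply: ler_wpM2r.
Qed.

End H.

Unset Implicit Arguments.

Theorem proposition5 (R : realType) (d mstar L : nat)
  (Pistar : 'M[R]_d) (beta bhat : 'I_L -> 'cV[R]_d) (Pihat : 'M[R]_d)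
  (betabar : 'I_mstar -> 'cV[R]_d) (mu : 'I_mstar -> R) (eps : R) :
  orth_proj_dim Pistar mstar ->
  (forall l, in_range_proj Pistar (beta l)) ->
  is_minimizer mstar bhat Pihat ->
  (forall k, in_Bstar beta (betabar k)) ->
  (forall k, 0 <= mu k) ->
  loewner_le Pistar (\sum_(k < mstar) mu k *: (betabar k *m (betabar k)^T)) ->
  (forall l, vnorm (bhat l - beta l) <= eps) ->
  \tr ((1%:M - Pihat) *m Pistar) <= 4 * eps ^+ 2 * (\sum_(k < mstar) mu k) /\
  \tr ((Pihat - Pistar) *m (Pihat - Pistar)) <= 8 * eps ^+ 2 * (\sum_(k < mstar) mu k).
Proof.
move=> [sP [PP rP]] hbeta [[sH [pH [pIH trH]]] minH] hbar hmu hle heps.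
rewrite /loewner_le subr0 in pH.
rewrite /loewner_le in pIH hle.
have trP : \tr Pistar = mstar%:R by rewrite tr_proj // rP.
have psdP : psd Pistar by apply: psd_proj.
have sIP : (1%:M - Pistar)^T = 1%:M - Pistar.
  by rewrite linearB /= trmx1 sP.
have sIH : (1%:M - Pihat)^T = 1%:M - Pihat.
  by rewrite linearB /= trmx1 sH.
have psdIP : psd (1%:M - Pistar).
  by apply: psd_proj => //; rewrite mulmxBl !mulmxBr !mul1mx mulmx1 PP subrr subr0.
have hw : forall l, ((bhat l - beta l)^T *m (bhat l - beta l)) 0 0 <= eps ^+ 2.
  move=> l; have := heps l; rewrite /vnorm.
  have := vTv_ge0 (bhat l - beta l); set v := (_ 0 0) => h0 h.
  have := sqr_sqrtr h0; have := sqrtr_ge0 v; nra.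
have qle1 : forall (Q : 'M[R]_d) (w : 'cV[R]_d), psd Q ->
    (w^T *m (1%:M - Q) *m w) 0 0 <= (w^T *m w) 0 0.
  move=> Q w pQ; rewrite mulmxBr mulmxBl mulmx1 entB; have := pQ w; lra.
have objP : obj bhat Pistar <= eps ^+ 2.
  rewrite /obj; apply: bigmax_le; first exact: sqr_ge0.
  move=> l _; set w := bhat l - beta l.
  have -> : bhat l = w + beta l by rewrite /w subrK.
  rewrite qD //.
  have e : (1%:M - Pistar) *m beta l = 0 by rewrite mulmxBl mul1mx hbeta subrr.
  have e1 : w^T *m (1%:M - Pistar) *m beta l = 0 by rewrite -mulmxA e mulmx0.
  have e2 : (beta l)^T *m (1%:M - Pistar) *m beta l = 0 by rewrite -mulmxA e mulmx0.
  rewrite e1 e2 !ent0 mulr0 !addr0.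
  exact: le_trans (qle1 _ _ psdP) (hw l).
have hin : in_A mstar Pistar.
  split; first done; split; first by rewrite /loewner_le subr0.
  by split; [done | rewrite trP].
have objH : obj bhat Pihat <= eps ^+ 2 := le_trans (minH _ hin) objP.
have qH : forall l, ((bhat l)^T *m (1%:M - Pihat) *m bhat l) 0 0 <= eps ^+ 2.
  move=> l; apply: le_trans objH; rewrite /obj.
  exact: (le_bigmax _ (fun l => ((bhat l)^T *m (1%:M - Pihat) *m bhat l) 0 0) l).
have qbeta : forall l, ((beta l)^T *m (1%:M - Pihat) *m beta l) 0 0 <= 4 * eps ^+ 2.
  move=> l; set w := bhat l - beta l.
  have -> : beta l = bhat l - w by rewrite /w opprB addrC subrK.
  rewrite qB //.
  have := pIH (bhat l + w); rewrite qD // => h.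
  have := qH l; have := le_trans (qle1 _ w pH) (hw l); lra.
have qbar : forall k, ((betabar k)^T *m (1%:M - Pihat) *m betabar k) 0 0 <= 4 * eps ^+ 2.
  move=> k; have [c [hc ->]] := hbar k.
  apply: qsum_bound => //; first by rewrite mulr_ge0 // sqr_ge0.
set M := \sum_(k < mstar) mu k *: (betabar k *m (betabar k)^T) in hle *.
have sM : M^T = M.
  rewrite /M (raddf_sum (@trmx R d d)); apply: eq_bigr => k _.
  by apply: etrans (trZ _ _) _; rewrite trmx_mul trmxK.
have sMP : (M - Pistar)^T = M - Pistar by rewrite linearB /= sM sP.
have h1 := tr_psd pIH sMP hle.
rewrite mulmxBr (raddfB (@mxtrace R d)) /= in h1.
have trM : \tr ((1%:M - Pihat) *m M) <= 4 * eps ^+ 2 * \sum_(k < mstar) mu k.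
  rewrite /M mulmx_sumr (raddf_sum (@mxtrace R d)) /= mulr_sumr.
  apply: ler_sum => k _.
  rewrite -scalemxAr mxtraceZ mulmxA mxtrace_mulC trace11 mulmxA mulrC.
  by apply: ler_wpM2r; [exact: hmu | exact: qbar].
have first : \tr ((1%:M - Pihat) *m Pistar) <= 4 * eps ^+ 2 * \sum_(k < mstar) mu k.
  lra.
split; first exact: first.
have h2 := tr_psd pH sIH pIH.
rewrite mulmxBr mulmx1 (raddfB (@mxtrace R d)) /= in h2.
move: first; rewrite mulmxBl mul1mx (raddfB (@mxtrace R d)) /= => first.
rewrite mulmxBl !mulmxBr !(raddfB (@mxtrace R d)) /= PP (mxtrace_mulC Pistar Pihat).
lra.
Qed.
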